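(* Let $2 \le m \le n$ and $1 \le h \le k \le m$. Let $P$ be a nonzero orthogonal projection on $\mathcal{H}_n\otimes\mathcal{H}_m$. Then \[ \|P\|_{S(k)} \ge \Big(1 - \frac{k-h}{m-1}\Big)\|P\|_{S(h)} + \frac{k-h}{m-1}. \]
   Context: $\mathcal{H}_d = \mathbb{C}^d$ and $m\le n$. $SR$ denotes Schmidt rank, i.e. the number of nonzero singular values of the coefficient matrix of a vector in $\mathcal{H}_n\otimes\mathcal{H}_m$. For $1\le k\le m$, \[ \|X\|_{S(k)} := \sup\{|\langle w|X|v\rangle| : |v\rangle,|w\rangle \text{ unit vectors}, SR(|v\rangle),SR(|w\rangle)\le k\}. \] *)

(* Defs.v *)
From HB Require Import structures.
From mathcomp Require Import all_boot all_order all_algebra.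
From mathcomp Require Import complex.
From mathcomp Require Import all_classical all_reals.
Set Implicit Arguments. Unset Strict Implicit. Unset Printing Implicit Defensive.
Import Order.TTheory GRing.Theory Num.Theory.
Local Open Scope ring_scope.
Local Open Scope classical_set_scope.

(* Complex numbers C = R[i] over a real field R (realType, for suprema).
   H_n (x) H_m = C^(n*m); a vector is a column 'cV[R[i]]_(n*m), with the
   basis vector e_i (x) f_j at index mxvec_index i j. *)

Definition cabs (R : rcfType) (z : R[i]) : R := ComplexField.Normc.normc z.

Definition adj (R : rcfType) (p q : nat) (A : 'M[R[i]]_(p, q)) : 'M[R[i]]_(q, p) :=
  \matrix_(i, j) conjc (A j i).

Definition dotC (R : rcfType) (d : nat) (w v : 'cV[R[i]]_d) : R[i] :=
  (adj w *m v) 0 0.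

Definition unit_vec (R : rcfType) (d : nat) (v : 'cV[R[i]]_d) : Prop :=
  dotC v v = 1.

(* coefficient matrix of v in H_n (x) H_m : the n x m matrix (v_{ij}) *)
Definition coef_mx (R : rcfType) (n m : nat) (v : 'cV[R[i]]_(n * m)) : 'M[R[i]]_(n, m) :=
  vec_mx (v^T).

Definition SR (R : rcfType) (n m : nat) (v : 'cV[R[i]]_(n * m)) : nat :=
  \rank (coef_mx v).

Definition normS (R : realType) (n m k : nat) (X : 'M[R[i]]_(n * m)) : R :=
  sup [set r : R | exists (v w : 'cV[R[i]]_(n * m)),
         [/\ unit_vec v, unit_vec w, (SR v <= k)%N, (SR w <= k)%N &
             r = cabs ((adj w *m X *m v) 0 0)]].

Definition orth_proj (R : rcfType) (d : nat) (P : 'M[R[i]]_d) : Prop :=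
  P *m P = P /\ adj P = P.

(* Main.v *)
Require Import Defs.
From HB Require Import structures.
From mathcomp Require Import all_boot all_order all_algebra.
From mathcomp Require Import complex.
From mathcomp Require Import all_classical all_reals.
From mathcomp Require Import spectral sesquilinear.
From mathcomp Require Import ring lra zify.
Import Order.TTheory GRing.Theory Num.Theory.
Local Open Scope ring_scope.
Local Open Scope sesquilinear_scope.
Set Implicit Arguments. Unset Strict Implicit. Unset Printing Implicit Defensive.

Section Part1.
Variable R : realType.
Local Notation C := (R[i]).

Definition Fm p q (X Y : 'M[C]_(p, q)) : C := \tr (X *m Y^t*).

Lemma ctM p q r (A : 'M[C]_(p, q)) (B : 'M[C]_(q, r)) : (A *m B)^t* = B^t* *m A^t*.
Proof. by rewrite trmx_mul map_mxM. Qed.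

Lemma ctK p q (A : 'M[C]_(p, q)) : A^t*^t* = A.
Proof. exact: trmxCK. Qed.

Lemma FmE p q (X Y : 'M[C]_(p, q)) : Fm X Y = \sum_i \sum_j X i j * (Y i j)^*.
Proof. by rewrite /Fm /mxtrace; apply: eq_bigr => i _; rewrite mxE; apply: eq_bigr => j _; rewrite !mxE. Qed.

Lemma Fm_mulr p q r (X : 'M[C]_(p, q)) (A : 'M[C]_(q, r)) Y :
  Fm (X *m A) Y = Fm X (Y *m A^t*).
Proof. by rewrite /Fm ctM ctK mulmxA. Qed.

Lemma Fm_mull p q r (A : 'M[C]_(p, q)) (X : 'M[C]_(q, r)) Y :
  Fm (A *m X) Y = Fm X (A^t* *m Y).
Proof. by rewrite /Fm ctM ctK -mulmxA mxtrace_mulC mulmxA. Qed.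

Lemma Fm_sym p q (X Y : 'M[C]_(p, q)) : Fm Y X = (Fm X Y)^*.
Proof.
rewrite !FmE rmorph_sum; apply: eq_bigr => i _; rewrite rmorph_sum.
by apply: eq_bigr => j _; rewrite rmorphM /= conjCK mulrC.
Qed.

Lemma Fm_ge0 p q (X : 'M[C]_(p, q)) : 0 <= Fm X X.
Proof. rewrite FmE; apply: sumr_ge0 => i _; apply: sumr_ge0 => j _; exact: mul_conjC_ge0. Qed.

Lemma FmDl p q (X X' Y : 'M[C]_(p, q)) : Fm (X + X') Y = Fm X Y + Fm X' Y.
Proof. by rewrite /Fm mulmxDl mxtraceD. Qed.

Lemma FmZl p q a (X Y : 'M[C]_(p, q)) : Fm (a *: X) Y = a * Fm X Y.
Proof. by rewrite /Fm -scalemxAl mxtraceZ. Qed.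

Lemma FmNl p q (X Y : 'M[C]_(p, q)) : Fm (- X) Y = - Fm X Y.
Proof. by rewrite -scaleN1r FmZl mulN1r. Qed.

Lemma FmDr p q (X Y Y' : 'M[C]_(p, q)) : Fm X (Y + Y') = Fm X Y + Fm X Y'.
Proof. by rewrite Fm_sym FmDl rmorphD /= -!Fm_sym. Qed.

Lemma FmZr p q a (X Y : 'M[C]_(p, q)) : Fm X (a *: Y) = a^* * Fm X Y.
Proof. by rewrite Fm_sym FmZl rmorphM /= -Fm_sym. Qed.

Lemma sum_mxvec p q (f : 'I_(p * q) -> C) :
  \sum_k f k = \sum_i \sum_j f (mxvec_index i j).
Proof.
rewrite (reindex _ (curry_mxvec_bij _ _)) /=.
by rewrite pair_big /=; apply: eq_bigr => -[i j] _.
Qed.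

Lemma Fm_dotmx p q (X Y : 'M[C]_(p, q)) : Fm X Y = dotmx (mxvec X) (mxvec Y).
Proof.
rewrite dotmxE FmE !mxE sum_mxvec; apply: eq_bigr => i _; apply: eq_bigr => j _.
by rewrite !mxE !mxvecE.
Qed.

Lemma Fm_CS p q (X Y : 'M[C]_(p, q)) : `|Fm X Y| ^+ 2 <= Fm X X * Fm Y Y.
Proof. by rewrite !Fm_dotmx; exact: (CauchySchwarz (@dotmx C (p * q)) _ _).1. Qed.


Lemma adjE p q (A : 'M[C]_(p, q)) : adj A = A^t*.
Proof. by apply/matrixP => i j; rewrite !mxE. Qed.

Lemma dotC_Fm d (w v : 'cV[C]_d) : dotC w v = Fm v w.
Proof. by rewrite /dotC /Fm adjE mxtrace_mulC trace_mx11. Qed.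

Lemma coef_Fm n m (v w : 'cV[C]_(n * m)) : Fm (coef_mx v) (coef_mx w) = Fm v w.
Proof.
rewrite !FmE sum_mxvec; apply: eq_bigr => i _; apply: eq_bigr => j _.
by rewrite big_ord1 !mxE.
Qed.

Definition vecC n m (X : 'M[C]_(n, m)) : 'cV[C]_(n * m) := (mxvec X)^T.

Lemma coef_vecC n m (X : 'M[C]_(n, m)) : coef_mx (vecC X) = X.
Proof. by rewrite /coef_mx /vecC trmxK mxvecK. Qed.

Lemma coefZ n m a (v : 'cV[C]_(n * m)) : coef_mx (a *: v) = a *: coef_mx v.
Proof. by rewrite /coef_mx linearZ /= linearZ. Qed.

Lemma unit_vecE d (v : 'cV[C]_d) : unit_vec v <-> Fm v v = 1.
Proof. by rewrite /unit_vec dotC_Fm. Qed.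

Lemma elemE d (P : 'M[C]_d) (v w : 'cV[C]_d) : (adj w *m P *m v) 0 0 = Fm (P *m v) w.
Proof. by rewrite -mulmxA -dotC_Fm. Qed.

Definition Fn p q (X : 'M[C]_(p, q)) : R := complex.Re (Fm X X).

Lemma FnE p q (X : 'M[C]_(p, q)) : Fm X X = ((Fn X)%:C)%C.
Proof. by rewrite /Fn RRe_real // ger0_real // Fm_ge0. Qed.

Lemma Fn_ge0 p q (X : 'M[C]_(p, q)) : 0 <= Fn X.
Proof. by rewrite -lecR -FnE Fm_ge0. Qed.

Lemma cabsE (z : C) : ((cabs z)%:C)%C = `|z|.
Proof. by case: z. Qed.

Lemma cabs_ge0 (z : C) : 0 <= cabs z.
Proof. by case: z => a b; rewrite /cabs /= sqrtr_ge0. Qed.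

Lemma Fm_CSR p q (X Y : 'M[C]_(p, q)) : cabs (Fm X Y) ^+ 2 <= Fn X * Fn Y.
Proof. by rewrite -lecR rmorphXn rmorphM /= cabsE -!FnE Fm_CS. Qed.


Lemma FmNr p q (X Y : 'M[C]_(p, q)) : Fm X (- Y) = - Fm X Y.
Proof. by rewrite -scaleN1r FmZr rmorphN1 mulN1r. Qed.

Section Proj.
Variables (d : nat) (P : 'M[C]_d).
Hypotheses (HPP : P *m P = P) (HPt : P^t* = P).

Lemma Fm_P1 (v w : 'cV[C]_d) : Fm (P *m v) w = Fm (P *m v) (P *m w).
Proof. by rewrite -{1}HPP -mulmxA Fm_mull HPt. Qed.

Lemma Fm_P2 (v w : 'cV[C]_d) : Fm v (P *m w) = Fm (P *m v) (P *m w).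
Proof. by rewrite Fm_sym Fm_P1 -Fm_sym. Qed.

Lemma Fn_P_le (v : 'cV[C]_d) : Fn (P *m v) <= Fn v.
Proof.
set u := v - P *m v.
have Hv : v = P *m v + u by rewrite /u addrC subrK.
have c1 : Fm (P *m v) u = 0 by rewrite /u FmDr FmNr {1}Fm_P1 subrr.
have c2 : Fm u (P *m v) = 0 by rewrite Fm_sym c1 conjC0.
have : Fm v v = Fm (P *m v) (P *m v) + Fm u u.
  clearbody u; by rewrite {1 2}Hv FmDl !FmDr c1 c2 addr0 add0r.
rewrite !FnE -rmorphD /= => /complexI ->.
by rewrite lerDl Fn_ge0.
Qed.

End Proj.

Definition Dg p (S : {set 'I_p}) : 'M[C]_p := \matrix_(i, j) ((i == j) && (i \in S))%:R.

Lemma mulDg p q (A : 'M[C]_(q, p)) S i j : (A *m Dg S) i j = A i j * (j \in S)%:R.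
Proof.
rewrite mxE (bigD1 j) //= big1 ?addr0; first by rewrite mxE eqxx.
by move=> k /negPf nkj; rewrite mxE nkj mulr0.
Qed.

Lemma Dg_ct p (S : {set 'I_p}) : (Dg S)^t* = Dg S.
Proof.
apply/matrixP => i j; rewrite !mxE conjC_nat eq_sym.
by case: eqP => [->|] //.
Qed.

Lemma Dg_idem p (S : {set 'I_p}) : Dg S *m Dg S = Dg S.
Proof.
apply/matrixP => i j; rewrite mulDg mxE.
by case: eqP => [->|]; case: (j \in S); rewrite ?mulr1 ?mulr0 ?andbF.
Qed.

Lemma rank_Dg p (S : {set 'I_p}) : (\rank (Dg S) <= #|S|)%N.
Proof.
have -> : Dg S = \sum_(j in S) delta_mx j j.
  apply/matrixP => a b; rewrite summxE mxE.
  case: eqP => [<-|nab].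
    case: (boolP (a \in S)) => aS.
      by rewrite (bigD1 a) //= big1 ?addr0 ?mxE ?eqxx // => j /andP[_ /negPf ja]; rewrite mxE eq_sym ja.
    by rewrite big1 // => j jS; rewrite mxE; case: eqP => // aj; subst j; rewrite jS in aS.
  by rewrite big1 // => j _; rewrite mxE; case: eqP => // aj; case: eqP => // bj; subst; case: nab.
rewrite -sum1_card.
apply: (big_ind2 (fun (A : 'M[C]_p) (k : nat) => (\rank A <= k)%N)).
- by rewrite mxrank0.
- move=> A1 k1 A2 k2 h1 h2; apply: leq_trans (mxrank_add _ _) _; exact: leq_add.
- by move=> j _; rewrite mxrank_delta.
Qed.

Definition colw p q (W : 'M[C]_(q, p)) (j : 'I_p) : R := \sum_i cabs (W i j) ^+ 2.

Lemma colwC p q (W : 'M[C]_(q, p)) j : ((colw W j)%:C)%C = \sum_i W i j * (W i j)^*.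
Proof.
rewrite rmorph_sum; apply: eq_bigr => i _.
by rewrite rmorphXn /= cabsE sqr_normc.
Qed.

Lemma colw_ge0 p q (W : 'M[C]_(q, p)) j : 0 <= colw W j.
Proof. by apply: sumr_ge0 => i _; rewrite exprn_ge0 // cabs_ge0. Qed.

Lemma Fn_col p q (W : 'M[C]_(q, p)) : Fn W = \sum_j colw W j.
Proof.
apply: complexI; rewrite -FnE FmE exchange_big rmorph_sum /=.
by apply: eq_bigr => j _; rewrite colwC.
Qed.

Lemma Fn_mulDg p q (W : 'M[C]_(q, p)) S : Fn (W *m Dg S) = \sum_(j in S) colw W j.
Proof.
apply: complexI; rewrite -FnE FmE exchange_big rmorph_sum /=.
rewrite [RHS]big_mkcond /=.
apply: eq_bigr => j _; rewrite colwC.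
case: (boolP (j \in S)) => jS.
  by apply: eq_bigr => i _; rewrite !mulDg jS mulr1.
by rewrite big1 // => i _; rewrite !mulDg (negPf jS) mulr0 mul0r.
Qed.


Local Notation "B ^!" :=
  (orthomx Num.conj (mx_of_hermitian (hermitian1mx _)) B) : matrix_set_scope.
Local Notation "A '_|_ B" := (A%MS <= B^!)%MS : bool_scope.

Lemma unit_ex n m (Y : 'M[C]_(n, m)) : exists U : 'M[C]_m,
  [/\ U *m U^t* = 1%:M, U^t* *m U = 1%:M &
      forall i (j : 'I_m), (\rank Y <= j)%N -> (Y *m U^t*) i j = 0].
Proof.
have gen : forall p (e : p = m) (U0 : 'M[C]_(p, m)), U0 *m U0^t* = 1%:M ->
    (forall i (j : 'I_p), (\rank Y <= j)%N -> (Y *m U0^t*) i j = 0) ->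
    exists U : 'M[C]_m,
    [/\ U *m U^t* = 1%:M, U^t* *m U = 1%:M &
      forall i (j : 'I_m), (\rank Y <= j)%N -> (Y *m U^t*) i j = 0].
  move=> p e; subst p => U0 hU hY; exists U0; split => //.
  have : U0^t* \is unitarymx by rewrite trmxC_unitary; apply/unitarymxP.
  by move/unitarymxP; rewrite trmxCK.
apply: (gen _ (add_rank_ortho Y) (schmidt_complete Y)).
  by apply/unitarymxP; exact: schmidt_complete_unitarymx.
have hB : Y *m (schmidt (row_base Y^!%MS))^t* = 0.
  have : (schmidt (row_base Y^!%MS) <= Y^!)%MS.
    by rewrite eqmx_schmidt_free ?row_base_free // eq_row_base.
  move/orthomx1P => h.
  have -> : Y *m (schmidt (row_base Y^!%MS))^t* = (schmidt (row_base Y^!%MS) *m Y^t*)^t*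
    by rewrite ctM ctK.
  by rewrite h; apply/matrixP => a b; rewrite !mxE conjC0.
move=> i j hj.
rewrite /schmidt_complete tr_col_mx map_row_mx mul_mx_row hB.
move: hj; case: (split_ordP j) => k -> hk.
  by move: (ltn_ord k); rewrite ltnNge hk.
by rewrite row_mxEr mxE.
Qed.


Lemma cabs_real (t : R) : 0 <= t -> cabs ((t%:C)%C) = t.
Proof. by move=> t0; rewrite /cabs /= expr0n /= addr0 sqrtr_sqr ger0_norm. Qed.

Lemma conjR (t : R) : ((t%:C)%C)^* = (t%:C)%C.
Proof. exact: conjc_real. Qed.

Lemma rank_scale p q (a : C) (A : 'M[C]_(p, q)) : (\rank (a *: A) <= \rank A)%N.
Proof. by rewrite -mul_mx_scalar mxrankM_maxl. Qed.

Lemma Fn_unitr p q (X : 'M[C]_(p, q)) (U : 'M[C]_q) : U *m U^t* = 1%:M ->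
  Fn (X *m U) = Fn X.
Proof. by move=> hU; rewrite /Fn Fm_mulr -mulmxA hU mulmx1. Qed.

Lemma Fn_delta p q (i : 'I_p) (j : 'I_q) : Fm (delta_mx i j : 'M[C]_(p, q)) (delta_mx i j) = 1.
Proof.
rewrite FmE (bigD1 i) //= [X in _ + X]big1 ?addr0; last first.
  by move=> a /negPf ai; apply: big1 => b _; rewrite mxE ai mul0r.
rewrite (bigD1 j) //= [X in _ + X]big1 ?addr0; last first.
  by move=> b /negPf bj; rewrite mxE bj andbF mul0r.
by rewrite mxE !eqxx /= mul1r conjC1.
Qed.

Lemma avg_arith (N l' ax S' A1 A2 : R) : 0 < N -> l' + 1 <= N ->
  0 <= l' -> (l' + 1) * S' <= N * A1 -> l' * S' <= N * A2 ->
  (l' + 1) * (ax + S') <= (N + 1) * A1 \/ (l' + 1) * (ax + S') <= (N + 1) * (ax + A2).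
Proof.
move=> N0 lN l0 h1 h2.
have [hc|hc] := lerP (ax + A2) A1; [left|right].
- have e1 : (N - l') * ((l' + 1) * S') <= (N - l') * (N * A1) by apply: ler_wpM2l => //; lra.
  have e2 : (l' + 1) * (l' * S') <= (l' + 1) * (N * A2) by apply: ler_wpM2l => //; lra.
  have e3 : (l' + 1) * (N * (ax + A2)) <= (l' + 1) * (N * A1).
    by apply: ler_wpM2l; [lra|]; apply: ler_wpM2l; lra.
  have : N * ((l' + 1) * (ax + S')) <= N * ((N + 1) * A1) by nra.
  by rewrite ler_pM2l.
- have e1 : (N - l') * ((l' + 1) * S') <= (N - l') * (N * A1) by apply: ler_wpM2l => //; lra.
  have e2 : (l' + 1) * (l' * S') <= (l' + 1) * (N * A2) by apply: ler_wpM2l => //; lra.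
  have e3 : (N - l') * (N * A1) <= (N - l') * (N * (ax + A2)).
    by apply: ler_wpM2l; [lra|]; apply: ler_wpM2l; lra.
  have : N * ((l' + 1) * (ax + S')) <= N * ((N + 1) * (ax + A2)) by nra.
  by rewrite ler_pM2l.
Qed.

Lemma avg (I : finType) (a : I -> R) N : forall (S : {set I}), #|S| = N ->
  forall l, (l <= N)%N -> exists T : {set I},
    [/\ T \subset S, #|T| = l & l%:R * \sum_(i in S) a i <= N%:R * \sum_(i in T) a i].
Proof.
elim: N => [|N IH] S hS l hl.
  move: hl; rewrite leqn0 => /eqP ->.
  exists (finset.set0 : {set I}); rewrite finset.sub0set cards0; split => //.
  by rewrite !mul0r.
have [x xS] : exists x, x \in S.
  by apply/finset.set0Pn; rewrite -card_gt0 hS.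
have hS' : #|S :\ x| = N by move: hS; rewrite (cardsD1 x) xS add1n => -[].
case: (ltngtP l N.+1) => hl'; last first.
- by exists S; split => //; rewrite hl'.
- by rewrite ltnNge hl in hl'.
case: l hl hl' => [|l'] hl hl'.
  by exists (finset.set0 : {set I}); rewrite finset.sub0set cards0 big_set0 mulr0 mul0r; split.
have [T1 [s1 c1 i1]] := IH _ hS' (l'.+1) hl'.
have [T2 [s2 c2 i2]] := IH _ hS' l' (ltnW hl').
have xT2 : x \notin T2.
  by apply/negP => /(fintype.subsetP s2); rewrite !inE eqxx.
rewrite (big_setD1 x xS) /=.
rewrite -!natr1 in i1 *.
have N0 : 0 < N%:R :> R by rewrite ltr0n; exact: leq_ltn_trans (leq0n l') hl'.
have lN : l'%:R + 1 <= N%:R :> R by rewrite natr1 ler_nat.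
have [h|h] := @avg_arith (N%:R) (l'%:R) (a x) (\sum_(i in S :\ x) a i)
  (\sum_(i in T1) a i) (\sum_(i in T2) a i) N0 lN (ler0n _ _) i1 i2.
- exists T1; split => //; first by apply: fintype.subset_trans s1 (subsetDl _ _).
- exists (x |: T2); split.
  + rewrite finset.subUset finset.sub1set xS; exact: fintype.subset_trans s2 (subsetDl _ _).
  + by rewrite cardsU1 xT2 c2.
  + by rewrite (big_setU1 _ xT2) /=.
Qed.

Section Key.
Variables (n m h k : nat) (P : 'M[C]_(n * m)).
Hypotheses (HPP : P *m P = P) (HPt : P^t* = P).

Definition Aset j : set R := [set r : R | exists (v w : 'cV[C]_(n * m)),
         [/\ unit_vec v, unit_vec w, (SR v <= j)%N, (SR w <= j)%N &
             r = cabs ((adj w *m P *m v) 0 0)]].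

Lemma normSE j : normS j P = sup (Aset j).
Proof. by []. Qed.

Lemma elem_sq (v w : 'cV[C]_(n * m)) : unit_vec v -> unit_vec w ->
  cabs ((adj w *m P *m v) 0 0) ^+ 2 <= Fn (P *m v) * Fn (P *m w).
Proof. by move=> _ _; rewrite elemE Fm_P1 // Fm_CSR. Qed.

Lemma Fn_unit (v : 'cV[C]_(n * m)) : unit_vec v -> Fn v = 1.
Proof. by move/unit_vecE => hv; apply: complexI; rewrite -FnE hv. Qed.

Lemma FnP_le1 (v : 'cV[C]_(n * m)) : unit_vec v -> Fn (P *m v) <= 1.
Proof. by move=> hv; rewrite -(Fn_unit hv); apply: Fn_P_le. Qed.

Lemma elem_le1 j r : Aset j r -> 0 <= r <= 1.
Proof.
move=> [v [w [hv hw _ _ ->]]]; rewrite cabs_ge0 /=.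
have h1 := elem_sq hv hw; have h2 := FnP_le1 hv; have h3 := FnP_le1 hw.
have h4 := Fn_ge0 (P *m v); have h5 := Fn_ge0 (P *m w).
have h6 := cabs_ge0 ((adj w *m P *m v) 0 0).
nra.
Qed.

Lemma le_normS j r : Aset j r -> r <= normS j P.
Proof.
move=> hr; rewrite normSE; apply: sup_upper_bound => //; split; first by exists r.
by exists 1 => x /elem_le1 /andP[].
Qed.

Lemma keyV (x : 'cV[C]_(n * m)) (M : 'M[C]_m) : unit_vec x -> P *m x = x ->
  M *m M = M -> M^t* = M -> (\rank M <= k)%N -> (Aset k !=set0)%classic ->
  Fn (coef_mx x *m M) <= normS k P.
Proof.
move=> hx hPx hMM hMt hrk [r0 hr0].
set Z := coef_mx x *m M.
have [s0|spos] := eqVneq (Fn Z) 0.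
  by rewrite s0; apply: le_trans (le_normS hr0); case/andP: (elem_le1 hr0).
have sgt : 0 < Fn Z by rewrite lt_def spos Fn_ge0.
set c := (Num.sqrt (Fn Z))^-1.
set v0 := vecC Z.
set v := ((c%:C)%C) *: v0.
have cc : c * c * Fn Z = 1.
  rewrite /c -invfM -expr2 sqr_sqrtr ?Fn_ge0 // mulVf //.
have hv0 : Fm v0 v0 = ((Fn Z)%:C)%C by rewrite -coef_Fm coef_vecC FnE.
have hv : unit_vec v.
  apply/unit_vecE; rewrite /v FmZl FmZr hv0 conjR -!rmorphM /= mulrA cc.
  by [].
have hSR : (SR v <= k)%N.
  rewrite /SR /v coefZ coef_vecC; apply: leq_trans (rank_scale _ _) _.
  by apply: leq_trans (mxrankM_maxr _ _) hrk.
have hA : Aset k (cabs ((adj v *m P *m v) 0 0)) by exists v, v; split.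
apply: le_trans (le_normS hA).
have e1 : Fm (P *m v0) x = ((Fn Z)%:C)%C.
  rewrite Fm_mull HPt hPx -coef_Fm coef_vecC /Z -{1}hMM mulmxA Fm_mulr hMt.
  by rewrite FnE.
have e2 : Fm (P *m v0) v0 = ((Fn (P *m v0))%:C)%C by rewrite Fm_P1 // FnE.
have cs := Fm_CSR (P *m v0) x.
rewrite e1 cabs_real ?Fn_ge0 // (Fn_unit hx) mulr1 in cs.
rewrite elemE /v -scalemxAr FmZl FmZr conjR e2.
have -> : (c%:C * (c%:C * (Fn (P *m v0))%:C))%C = ((c * (c * Fn (P *m v0)))%:C)%C.
  by rewrite !rmorphM.
rewrite cabs_real; last first.
  by rewrite !mulr_ge0 ?Fn_ge0 // invr_ge0 sqrtr_ge0.
have c0 : 0 <= c by rewrite invr_ge0 sqrtr_ge0.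
have hz := Fn_ge0 (P *m v0).
nra.
Qed.


Lemma keyY (x : 'cV[C]_(n * m)) (Y : 'M[C]_(n, m)) :
  (2 <= m)%N -> (1 <= h)%N -> (h <= k)%N -> (k <= m)%N ->
  unit_vec x -> P *m x = x -> Fm Y Y = 1 ->
  (1 <= \rank Y)%N -> (\rank Y <= h)%N -> (Aset k !=set0)%classic ->
  (1 - (k - h)%:R / (m - 1)%:R) * cabs (Fm Y (coef_mx x)) ^+ 2
    + (k - h)%:R / (m - 1)%:R <= normS k P.
Proof.
move=> m2 h1 hk km hx hPx hY1 q1 qh hne.
set X := coef_mx x. set q := \rank Y.
have [U [hU1 hU2 hYz]] := unit_ex Y.
set W := X *m U^t*.
have hqm : (q <= m)%N by apply: rank_leq_col.
pose Q : {set 'I_m} := [set widen_ord hqm j | j : 'I_q].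
have cardQ : #|Q| = q.
  rewrite card_imset ?card_ord // => a b /(congr1 val) /= ab; exact: val_inj.
have memQ : forall j : 'I_m, j \notin Q -> (q <= j)%N.
  move=> j; apply: contraNT; rewrite -ltnNge => jq.
  by apply/imsetP; exists (Ordinal jq) => //; apply: val_inj.
have Hzero : Y *m U^t* *m Dg Q = Y *m U^t*.
  apply/matrixP => i j; rewrite mulDg.
  case: (boolP (j \in Q)) => jQ; first by rewrite mulr1.
  by rewrite mulr0 hYz // memQ.
have FnY : Fn Y = 1 by apply: complexI; rewrite -FnE hY1.
have FnX : Fn X = 1 by rewrite /Fn /X coef_Fm; exact: Fn_unit.
have tot : \sum_j colw W j = 1.
  by rewrite -Fn_col Fn_unitr ?ctK.
set sq := \sum_(j in Q) colw W j.
have csQ : cabs (Fm Y X) ^+ 2 <= sq.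
  have -> : Fm Y X = Fm (Y *m U^t*) (W *m Dg Q).
    rewrite -Dg_ct -Fm_mulr Hzero /W -Fm_mulr -mulmxA hU2 mulmx1 //.
  apply: le_trans (Fm_CSR _ _) _.
  by rewrite Fn_unitr ?ctK // FnY mul1r Fn_mulDg.
have split_tot : sq + \sum_(j in ~: Q) colw W j = 1.
  rewrite -tot [RHS](bigID (fun j => j \in Q)) /=.
  by congr (_ + _); apply: eq_bigl => j; rewrite !inE.
set l := (k - h)%N.
set N := #|~: Q|.
have cardN : N = (m - q)%N.
  have := cardsC Q; rewrite card_ord cardQ -/N => e.
  by apply/eqP; rewrite eq_sym -(eqn_add2l q) subnKC // e.
have hl : (l <= N)%N.
  rewrite cardN /l; apply: leq_sub => //.
have [T [sT cT iT]] := avg (colw W) (erefl N) hl.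
pose S := Q :|: T.
have sumS : \sum_(j in S) colw W j = sq + \sum_(j in T) colw W j.
  rewrite (eq_bigl [predU Q & T]); last by move=> j; rewrite !inE.
  by rewrite bigU // disjoint_sym finset.disjoints_subset.
have cardS : (#|S| <= k)%N.
  rewrite cardsU cardQ cT; apply: leq_trans (leq_subr _ _) _.
  rewrite /l; lia.
pose M := U^t* *m Dg S *m U.
have MM : M *m M = M.
  by rewrite /M !mulmxA -(mulmxA _ U) hU1 mulmx1 -(mulmxA (U^t*) (Dg S) (Dg S)) Dg_idem.
have Mt : M^t* = M by rewrite /M !ctM ctK Dg_ct mulmxA.
have rM : (\rank M <= k)%N.
  apply: leq_trans (mxrankM_maxl _ _) _; apply: leq_trans (mxrankM_maxr _ _) _.
  exact: leq_trans (rank_Dg S) cardS.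
have kv := keyV hx hPx MM Mt rM hne.
have FnXM : Fn (X *m M) = \sum_(j in S) colw W j.
  by rewrite /M !mulmxA -/W Fn_unitr // Fn_mulDg.
rewrite FnXM sumS in kv.
have sq0 : 0 <= sq by apply: sumr_ge0 => j _; apply: colw_ge0.
have rest0 : 0 <= \sum_(j in ~: Q) colw W j by apply: sumr_ge0 => j _; apply: colw_ge0.
have T0 : 0 <= \sum_(j in T) colw W j by apply: sumr_ge0 => j _; apply: colw_ge0.
have Nm : (N <= m - 1)%N by rewrite cardN leq_sub2l.
have lm : (l <= m - 1)%N := leq_trans hl Nm.
have D0 : 0 < (m - 1)%:R :> R by rewrite ltr0n subn_gt0.
have NmR : N%:R <= (m - 1)%:R :> R by rewrite ler_nat.
have lmR : l%:R <= (m - 1)%:R :> R by rewrite ler_nat.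
have l0 : 0 <= l%:R :> R by rewrite ler0n.
move: iT; rewrite -/l => iT.
set D := (m - 1)%:R : R in D0 NmR lmR *.
set Lr := l%:R : R in l0 lmR iT *.
set cs := cabs (Fm Y X) in csQ *.
set sT' := \sum_(j in T) colw W j in T0 iT kv *.
set rest := \sum_(j in ~: Q) colw W j in rest0 split_tot iT *.
have e1 : N%:R * sT' <= D * sT' by apply: ler_wpM2r.
have e2 : (D - Lr) * cs ^+ 2 <= (D - Lr) * sq by apply: ler_wpM2l => //; lra.
suff : D * ((1 - Lr / D) * cs ^+ 2 + Lr / D) <= D * normS k P by rewrite ler_pM2l.
have -> : D * ((1 - Lr / D) * cs ^+ 2 + Lr / D) = (D - Lr) * cs ^+ 2 + Lr.
  by field; rewrite gt_eqF.
have e3 : D * (sq + sT') <= D * normS k P by apply: ler_wpM2l => //; lra.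
have er : rest = 1 - sq by lra.
rewrite er in iT.
lra.
Qed.

Lemma Fm_eq0 p q (X : 'M[C]_(p, q)) : Fm X X = 0 -> X = 0.
Proof.
rewrite Fm_dotmx => /eqP; rewrite dnorm_eq0 mxvec_eq0 => /eqP //.
Qed.

Lemma normalize (v : 'cV[C]_(n * m)) : v != 0 ->
  let c := (Num.sqrt (Fn v))^-1 in unit_vec (((c%:C)%C) *: v) /\ 0 < Fn v.
Proof.
move=> v0 c.
have sgt : 0 < Fn v.
  rewrite lt_def Fn_ge0 andbT; apply: contraNneq v0 => e.
  by apply/eqP; apply: Fm_eq0; rewrite FnE e.
split => //.
have cc : c * c * Fn v = 1.
  by rewrite /c -invfM -expr2 sqr_sqrtr ?Fn_ge0 // mulVf // gt_eqF.
apply/unit_vecE; rewrite FmZl FmZr conjR FnE.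
have -> : (c%:C * (c%:C * (Fn v)%:C))%C = ((c * (c * Fn v))%:C)%C by rewrite !rmorphM.
by rewrite mulrA cc.
Qed.

Lemma keyy (y x0 : 'cV[C]_(n * m)) :
  (2 <= m)%N -> (1 <= h)%N -> (h <= k)%N -> (k <= m)%N ->
  unit_vec x0 -> P *m x0 = x0 -> (Aset k !=set0)%classic ->
  unit_vec y -> (SR y <= h)%N ->
  (1 - (k - h)%:R / (m - 1)%:R) * Fn (P *m y) + (k - h)%:R / (m - 1)%:R <= normS k P.
Proof.
move=> m2 h1 hk km hx0 hPx0 hne hy hSR.
set Y := coef_mx y.
have hY1 : Fm Y Y = 1 by rewrite coef_Fm; apply/unit_vecE.
have q1 : (1 <= \rank Y)%N.
  rewrite lt0n mxrank_eq0; apply/negP => /eqP Y0.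
  by move: hY1; rewrite Y0 /Fm mul0mx mxtrace0 => /eqP; rewrite eq_sym oner_eq0.
have t1 : (k - h)%:R / (m - 1)%:R <= 1 :> R.
  rewrite ler_pdivrMr ?mul1r ?ler_nat ?ltr0n ?subn_gt0 //; lia.
have t0 : 0 <= (k - h)%:R / (m - 1)%:R :> R by rewrite divr_ge0 ?ler0n.
set t := (k - h)%:R / (m - 1)%:R in t0 t1 *.
have [a0|apos] := eqVneq (Fn (P *m y)) 0.
  have := keyY m2 h1 hk km hx0 hPx0 hY1 q1 hSR hne; rewrite -/t => kk.
  have := sqr_ge0 (cabs (Fm Y (coef_mx x0))).
  rewrite a0; nra.
have Py0 : P *m y != 0.
  by apply: contraNneq apos => ->; rewrite /Fn /Fm mul0mx mxtrace0.
have [hx sgt] := normalize Py0.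
set c := (Num.sqrt (Fn (P *m y)))^-1 in hx.
set x := ((c%:C)%C) *: (P *m y) in hx.
have hPx : P *m x = x by rewrite /x -scalemxAr mulmxA HPP.
have := keyY m2 h1 hk km hx hPx hY1 q1 hSR hne; rewrite -/t.
have -> : Fm Y (coef_mx x) = ((c * Fn (P *m y))%:C)%C.
  rewrite coef_Fm /x FmZr conjR Fm_P2 // FnE.
  by rewrite rmorphM.
have c0 : 0 <= c by rewrite invr_ge0 sqrtr_ge0.
rewrite cabs_real ?mulr_ge0 ?Fn_ge0 //.
have cc : c * c * Fn (P *m y) = 1.
  by rewrite /c -invfM -expr2 sqr_sqrtr ?Fn_ge0 // mulVf // gt_eqF.
have -> : (c * Fn (P *m y)) ^+ 2 = Fn (P *m y).
  by rewrite expr2 mulrACA mulrA cc mul1r.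
by [].
Qed.

End Key.

Lemma main (n m h k : nat) (P : 'M[C]_(n * m)) :
  (2 <= m)%N -> (m <= n)%N -> (1 <= h)%N -> (h <= k)%N -> (k <= m)%N ->
  orth_proj P -> P != 0 ->
  normS k P >=
    (1 - (k - h)%:R / (m - 1)%:R) * normS h P + (k - h)%:R / (m - 1)%:R.
Proof.
move=> m2 mn h1 hk km [HPP HadjP] P0.
have HPt : P^t* = P by rewrite -adjE.
have /existsP[i /existsP[j Pij]] : [exists i, exists j, P i j != 0].
  apply: contraNT P0; rewrite negb_exists => /forallP H.
  apply/eqP/matrixP => a b; rewrite mxE; move: (H a).
  by rewrite negb_exists => /forallP/(_ b); rewrite negbK => /eqP.
set v := col j P.
have v0 : v != 0.
  by apply: contraNneq Pij => e; move: (congr1 (fun M : 'cV[C]_(n * m) => M i 0) e); rewrite /v !mxE => ->.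
have hPv : P *m v = v by rewrite /v colE mulmxA HPP.
have [hx0 _] := normalize v0.
set x0 := (_ *: v) in hx0.
have hPx0 : P *m x0 = x0 by rewrite /x0 -scalemxAr hPv.
have n0 : (0 < n)%N by apply: leq_trans mn; apply: leq_trans m2.
have m0 : (0 < m)%N by apply: leq_trans m2.
pose vd := vecC (delta_mx (Ordinal n0) (Ordinal m0) : 'M[C]_(n, m)).
have hvd : unit_vec vd by apply/unit_vecE; rewrite -coef_Fm coef_vecC Fn_delta.
have hSRd : SR vd = 1%N by rewrite /SR coef_vecC mxrank_delta.
have neA : forall j', (1 <= j')%N -> (Aset P j' !=set0)%classic.
  move=> j' j1; exists (cabs ((adj vd *m P *m vd) 0 0)), vd, vd.
  by split => //; rewrite hSRd.
have neh := neA h h1.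
have nek := neA k (leq_trans h1 hk).
have t1 : (k - h)%:R / (m - 1)%:R <= 1 :> R.
  rewrite ler_pdivrMr ?mul1r ?ler_nat ?ltr0n ?subn_gt0 //; lia.
have t0 : 0 <= (k - h)%:R / (m - 1)%:R :> R by rewrite divr_ge0 ?ler0n.
have key := fun y => keyy HPP HPt m2 h1 hk km hx0 hPx0 nek (y := y).
set t := (k - h)%:R / (m - 1)%:R in t0 t1 key *.
have bnd : forall r, Aset P h r -> (1 - t) * r + t <= normS k P.
  move=> r [v' [w' [hv' hw' sv' sw' ->]]].
  have e := elem_sq HPP HPt hv' hw'.
  have kv := key _ hv' sv'. have kw := key _ hw' sw'.
  have a0 := Fn_ge0 (P *m v'). have b0 := Fn_ge0 (P *m w').
  have r0 := cabs_ge0 ((adj w' *m P *m v') 0 0).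
  set r' := cabs _ in e r0 *.
  set a := Fn (P *m v') in e a0 kv.
  set b := Fn (P *m w') in e b0 kw.
  have [ab|ab] := lerP a b.
    have : r' <= b by nra.
    nra.
  have : r' <= a by nra.
  nra.
rewrite /Order.ge /=.
have [t1e|t1n] := eqVneq t 1.
  case: neh => r hr; have := bnd r hr; rewrite t1e subrr !mul0r; lra.
have tl : 0 < 1 - t by rewrite subr_gt0 lt_def t1 eq_sym t1n.
suff : normS h P <= (normS k P - t) / (1 - t).
  by rewrite ler_pdivlMr // => hh; lra.
rewrite normSE; apply: ge_sup => // r hr.
rewrite ler_pdivlMr //; have := bnd r hr; lra.
Qed.

End Part1.

Unset Implicit Arguments.

Theorem corollary4p16 (R : realType) (n m h k : nat)
  (P : 'M[R[i]]_(n * m)) :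
  (2 <= m)%N -> (m <= n)%N -> (1 <= h)%N -> (h <= k)%N -> (k <= m)%N ->
  orth_proj P -> P != 0 ->
  normS k P >=
    (1 - (k - h)%:R / (m - 1)%:R) * normS h P + (k - h)%:R / (m - 1)%:R.
Proof. exact: main. Qed.
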